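(* Let $\mathcal{S}$ be finite, $\Pi$ irreducible stochastic on $\mathcal{S}$, $\kappa(x,y):=\pi_{xy}-\mathbf{1}_{x=y}$, $Q=(q(y))$ the invariant distribution, and assume detailed balance $q(y)\kappa(y,z)=q(z)\kappa(z,y)$ for all $y,z$. Let $\Phi:(0,\infty)\to\mathbb{R}$ be convex, continuously differentiable with continuous strictly positive second derivative, $\Phi(1)=0$, $\varphi:=\Phi'$. Let $\boldsymbol{\ell}_t=\ell(t,\cdot)$, $\ell(t,y):=p(t,y)/q(y)$, where $p(t,\cdot)$ is the time-$t$ law of the chain with generator $\Pi-\mathrm{I}$ started from a positive initial distribution. Fix $t_0>0$, $\varepsilon>0$, a continuous curve $(\psi_t)_{t_0\le t<t_0+\varepsilon}$ of functions $\mathcal{S}\to\mathbb{R}$, and a curve $(\ell^\psi_t)_{t_0\le t<t_0+\varepsilon}$ of positive functions with $\ell^\psi_{t_0}=\boldsymbol{\ell}_{t_0}$ and $\partial_t\ell^\psi_t+\nabla\cdot(\vartheta_{\boldsymbol{\ell}_t}\nabla\psi_t)=0$; let $P^\psi(t):=(q(x)\ell^\psi_t(x))_x$. Then for $t\in[t_0,t_0+\varepsilon)$, $$\partial_tH^\Phi\big(P^\psi(t)\,|\,Q\big)=\big\langle\varphi(\ell^\psi_t),\psi_t\big\rangle_{\mathbb{H}^1_\Theta(\mathcal{S},\boldsymbol{\ell}_tQ)} .$$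
   Context: $H^\Phi(P\,|\,Q):=\sum_yq(y)\Phi(p(y)/q(y))$. $\mathcal{Z}:=\{(x,y):\kappa(x,y)>0\}$, $c(x,y):=\frac12\kappa(x,y)q(x)$, $\nabla f(x,y):=f(y)-f(x)$, $(\nabla\cdot F)(x):=\frac12\sum_{y\neq x}\kappa(x,y)[F(x,y)-F(y,x)]$. $\Theta^\Phi(a,b):=\frac{a-b}{\varphi(a)-\varphi(b)}$ for $a\ne b$, $\Theta^\Phi(b,b):=1/\Phi''(b)$; for positive $\ell$, $\vartheta_\ell(x,y):=\Theta^\Phi(\ell(x),\ell(y))$ and $\langle f,g\rangle_{\mathbb{H}^1_\Theta(\mathcal{S},\ell Q)}:=\sum_{(x,y)\in\mathcal{Z}}c(x,y)\vartheta_\ell(x,y)\nabla f(x,y)\nabla g(x,y)$. *)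

(* Defs.v *)
From HB Require Import structures.
From mathcomp Require Import all_boot all_order all_algebra.
From mathcomp Require Import all_classical all_reals all_analysis.
Set Implicit Arguments. Unset Strict Implicit. Unset Printing Implicit Defensive.
Import Order.TTheory GRing.Theory Num.Theory.
Import numFieldNormedType.Exports.
Local Open Scope classical_set_scope.
Local Open Scope ring_scope.

Section Defs.
Variables (R : realType) (S : finType).

Definition kappa (Pi : S -> S -> R) (x y : S) : R := Pi x y - (x == y)%:R.

Definition stochastic (Pi : S -> S -> R) : Prop :=
  (forall x y, 0 <= Pi x y) /\ (forall x, \sum_(y : S) Pi x y = 1).

Fixpoint kpow (Pi : S -> S -> R) (k : nat) : S -> S -> R :=
  match k with
  | 0%N => fun x y => (x == y)%:R
  | k'.+1 => fun x y => \sum_(z : S) kpow Pi k' x z * Pi z y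
  end.

Definition irreducible (Pi : S -> S -> R) : Prop :=
  forall x y, exists k : nat, 0 < kpow Pi k x y.

Definition Hent (Phi : R -> R) (p q : S -> R) : R :=
  \sum_(y : S) q y * Phi (p y / q y).

Definition grad (f : S -> R) (x y : S) : R := f y - f x.

Definition div (Pi : S -> S -> R) (F : S -> S -> R) (x : S) : R :=
  2^-1 * \sum_(y : S | y != x) kappa Pi x y * (F x y - F y x).

(* Theta^Phi(a,b), with phi = Phi' and phi2 = Phi'' *)
Definition Theta (phi phi2 : R -> R) (a b : R) : R :=
  if a == b then (phi2 b)^-1 else (a - b) / (phi a - phi b).

Definition vartheta (phi phi2 : R -> R) (l : S -> R) (x y : S) : R :=
  Theta phi phi2 (l x) (l y).

Definition cw (Pi : S -> S -> R) (q : S -> R) (x y : S) : R :=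
  2^-1 * kappa Pi x y * q x.

Definition H1inner (Pi : S -> S -> R) (q : S -> R) (phi phi2 : R -> R)
  (l f g : S -> R) : R :=
  \sum_(x : S) \sum_(y : S | 0 < kappa Pi x y)
     cw Pi q x y * vartheta phi phi2 l x y * grad f x y * grad g x y.

End Defs.

(* derivative of f at t relative to the set I (one-sided at endpoints) *)
Definition deriv_within (R : realType) (I : set R) (f : R -> R) (t d : R) : Prop :=
  (fun h : R => h^-1 * (f (t + h) - f t))
    @ within [set h : R | h != 0 /\ I (t + h)] (nbhs (0:R)) --> d.

(* Main.v *)
Require Import Defs.
From HB Require Import structures.
From mathcomp Require Import all_boot all_order all_algebra.
From mathcomp Require Import all_classical all_reals all_analysis.
From mathcomp Require Import ring.
Import Order.TTheory GRing.Theory Num.Theory.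
Import numFieldNormedType.Exports.
Local Open Scope classical_set_scope.
Local Open Scope ring_scope.
Lemma G_cont {R : realType} {Phi : R -> R} {a dphi : R} :
  is_derive a (1:R) Phi dphi ->
  (fun k : R => if k == 0 then dphi else k^-1 * (Phi (a + k) - Phi a)) @ (0:R) --> dphi.
Proof.
move=> [dv dval].
have H : (fun h : R => h^-1 *: ((Phi \o shift a) (h *: 1) - Phi a)) @ (0:R)^' --> dphi.
  rewrite -dval; exact: dv.
set g := (fun k : R => _).
have e : g 0 = dphi by rewrite /g eqxx.
rewrite -e.
apply/continuous_withinNx.
rewrite e.
apply: cvg_trans H.
apply: near_eq_cvg; near=> k.
have k0 : k != 0 by near: k; exact: nbhs_dnbhs_neq.
rewrite /g (negbTE k0) /=. have -> : k%:A = k by rewrite /GRing.scale /= mulr1. by rewrite (addrC k a).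
Unshelve. all: by end_near. Qed.

Lemma dw_comp (R : realType) (I : set R) (f Phi : R -> R) (t d dphi : R) :
  is_derive (f t) (1:R) Phi dphi -> deriv_within I f t d ->
  deriv_within I (fun s => Phi (f s)) t (dphi * d).
Proof.
move=> hd hf.
have hG := G_cont hd.
set a := f t in hG *.
set G := (fun k : R => _) in hG.
have hk : (fun h => f (t+h) - a) @ within [set h : R | h != 0 /\ I (t + h)] (nbhs (0:R)) --> 0.
  have e : (fun h => f (t+h) - a) = (fun h => h * (h^-1 * (f (t+h) - f t))).
    apply/funext => h; case: (eqVneq h 0) => [->|h0].
      by rewrite addr0 mul0r subrr.
    by rewrite mulrA mulfV ?mul1r.
  have hid : (fun h : R => h) @ within [set h : R | h != 0 /\ I (t + h)] (nbhs (0:R)) --> 0.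
    apply: cvg_within_filter; exact: cvg_id.
  have FF : Filter (within [set h : R | h != 0 /\ I (t + h)] (nbhs (0:R))) by exact: within_filter.
  have H2 := @cvgM _ _ _ FF (fun h => h) _ _ _ hid hf.
  rewrite mul0r in H2.
  by rewrite e.
have e2 : (fun h => h^-1 * (Phi (f (t+h)) - Phi (f t))) =
   (fun h => G (f (t+h) - a) * (h^-1 * (f (t+h) - f t))).
  apply/funext => h; rewrite /G; case: eqP => [k0|/eqP k0].
    have -> : f (t + h) = a by apply/eqP; rewrite -subr_eq0 k0.
    by rewrite /a !subrr !mulr0.
  have -> : a + (f (t+h) - a) = f (t+h) by rewrite addrC subrK.
  by rewrite mulrCA mulrAC mulVf // mul1r.
rewrite /deriv_within e2.
exact: (cvgM (cvg_comp _ _ hk hG) hf).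
Qed.

Lemma dw_scale (R : realType) (I : set R) (f : R -> R) (c t d : R) :
  deriv_within I f t d -> deriv_within I (fun s => c * f s) t (c * d).
Proof.
rewrite /deriv_within => hf.
have FF : Filter (within [set h : R | h != 0 /\ I (t + h)] (nbhs (0:R))) by exact: within_filter.
have H := @cvgM _ _ _ FF (fun _ => c) _ _ _ (cvg_cst c) hf.
have e : (fun h : R => h^-1 * (c * f (t + h) - c * f t)) = (fun h => c * (h^-1 * (f (t + h) - f t))).
  by apply/funext => h; rewrite -mulrBr mulrCA.
rewrite e; exact: H.
Qed.

Lemma dw_sum (R : realType) (S : finType) (I : set R) (fs : S -> R -> R) (t : R) (ds : S -> R) :
  (forall y, deriv_within I (fs y) t (ds y)) ->
  deriv_within I (fun s => \sum_(y : S) fs y s) t (\sum_(y : S) ds y).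
Proof.
rewrite /deriv_within => hf.
have FF : Filter (within [set h : R | h != 0 /\ I (t + h)] (nbhs (0:R))) by exact: within_filter.
have e : (fun h : R => h^-1 * (\sum_(y : S) fs y (t + h) - \sum_(y : S) fs y t)) =
   (fun h => \sum_(y : S) h^-1 * (fs y (t + h) - fs y t)).
  by apply/funext => h; rewrite -sumrB mulr_sumr.
rewrite e; elim: (index_enum S) => [|y r IH].
  under eq_cvg do rewrite big_nil.
  rewrite big_nil; exact: cvg_cst.
under eq_cvg do rewrite big_cons.
rewrite big_cons; exact: cvgD.
Qed.
Lemma Theta_sym (R : realType) (phi phi2 : R -> R) a b :
  Theta phi phi2 a b = Theta phi phi2 b a.
Proof.
rewrite /Theta eq_sym; case: eqVneq => [->|_] //.
by rewrite -(opprB b) -(opprB (phi b)) invrN mulrNN.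
Qed.

Lemma algebra_id (R : realType) (S : finType) (Pi : S -> S -> R) (q : S -> R)
  (phi phi2 : R -> R) (l f psi : S -> R) :
  (forall x y, 0 <= Pi x y) ->
  (forall y z, q y * kappa Pi y z = q z * kappa Pi z y) ->
  \sum_(x : S) q x * (f x * - div Pi (fun y z => vartheta phi phi2 l y z * grad psi y z) x)
  = H1inner Pi q phi phi2 l f psi.
Proof.
move=> hPi hdb.
set V := vartheta phi phi2 l.
have hV : forall x y, V x y = V y x by move=> x y; rewrite /V /vartheta Theta_sym.
set w := fun x y => q x * kappa Pi x y * V x y.
have wsym : forall x y, w x y = w y x by move=> x y; rewrite /w hdb hV.
set A := \sum_(x : S) \sum_(y : S) w x y * f x * (psi y - psi x).
have L1 : \sum_(x : S) q x * (f x * - div Pi (fun y z => V y z * grad psi y z) x) = - A.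
  rewrite /A -sumrN; apply: eq_bigr => x _.
  rewrite /div.
  have -> : \sum_(y : S | y != x) kappa Pi x y * (V x y * grad psi x y - V y x * grad psi y x)
     = \sum_(y : S) 2 * (kappa Pi x y * V x y * (psi y - psi x)).
    rewrite big_mkcond; apply: eq_bigr => y _ /=.
    case: eqVneq => [->|_] /=; first by rewrite subrr !mulr0.
    rewrite /grad hV; ring.
  rewrite -mulr_sumr [2^-1 * _]mulrA mulVf ?mul1r; last by rewrite pnatr_eq0.
  rewrite mulrA mulrN mulr_sumr; congr (- _); apply: eq_bigr => y _.
  rewrite /w; ring.
have R1 : H1inner Pi q phi phi2 l f psi =
    2^-1 * \sum_(x : S) \sum_(y : S) w x y * (f y - f x) * (psi y - psi x).
  rewrite /H1inner mulr_sumr; apply: eq_bigr => x _.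
  rewrite mulr_sumr big_mkcond; apply: eq_bigr => y _ /=.
  case: ifP => hk; first by rewrite /cw /w /grad -/V; ring.
  case: (eqVneq x y) => [->|nxy]; first by rewrite /grad !subrr !mulr0.
  have k0 : kappa Pi x y = 0.
    apply/eqP; rewrite eq_le leNgt hk /=.
    by rewrite /kappa (negbTE nxy) subr0.
  by rewrite /w /cw k0; ring.
have B : \sum_(x : S) \sum_(y : S) w x y * f y * (psi y - psi x) = - A.
  rewrite exchange_big /A -sumrN; apply: eq_bigr => x _.
  rewrite -sumrN; apply: eq_bigr => y _; rewrite wsym; ring.
have C : \sum_(x : S) \sum_(y : S) w x y * (f y - f x) * (psi y - psi x) =
   \sum_(x : S) \sum_(y : S) w x y * f y * (psi y - psi x) - A.
  rewrite /A -sumrB; apply: eq_bigr => x _.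
  rewrite -sumrB; apply: eq_bigr => y _; ring.
rewrite L1 R1 C B.
have -> : - A - A = 2 * - A by ring.
by rewrite mulrA mulVf ?mul1r // pnatr_eq0.
Qed.
Theorem proposition8p4 (R : realType) (S : finType) (Pi : S -> S -> R)
  (q : S -> R) (Phi phi phi2 : R -> R) (p0 : S -> R) (p : R -> S -> R)
  (t0 eps : R) (psi lpsi : R -> S -> R) :
  stochastic Pi -> irreducible Pi ->
  (* Q is the invariant distribution *)
  (forall y, 0 <= q y) -> \sum_(y : S) q y = 1 ->
  (forall y, \sum_(x : S) q x * Pi x y = q y) ->
  (* detailed balance *)
  (forall y z, q y * kappa Pi y z = q z * kappa Pi z y) ->
  (* Phi convex on (0,oo), C^1 with continuous, strictly positive second derivative *)
  (forall x y a : R, 0 < x -> 0 < y -> 0 <= a <= 1 ->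
     Phi (a * x + (1 - a) * y) <= a * Phi x + (1 - a) * Phi y) ->
  (forall x : R, 0 < x -> is_derive x 1 Phi (phi x)) ->
  (forall x : R, 0 < x -> is_derive x 1 phi (phi2 x)) ->
  (forall x : R, 0 < x -> {for x, continuous phi2}) ->
  (forall x : R, 0 < x -> 0 < phi2 x) ->
  Phi 1 = 0 ->
  (* p(t,.) is the time-t law of the chain with generator Pi - I, started at p0 > 0 *)
  (forall x, 0 < p0 x) -> \sum_(x : S) p0 x = 1 ->
  (forall y, p 0 y = p0 y) ->
  (forall (t : R) y, 0 <= t ->
     deriv_within `[0, +oo[ (fun s => p s y) t (\sum_(x : S) p t x * kappa Pi x y)) ->
  (* the curves psi and l^psi *)
  0 < t0 -> 0 < eps ->
  (forall x, {within `[t0, t0 + eps[, continuous (fun t => psi t x)}) ->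
  (forall (t : R) x, t0 <= t < t0 + eps -> 0 < lpsi t x) ->
  (forall x, lpsi t0 x = p t0 x / q x) ->
  (forall (t : R) x, t0 <= t < t0 + eps ->
     deriv_within `[t0, t0 + eps[ (fun s => lpsi s x) t
       (- div Pi (fun y z => vartheta phi phi2 (fun w => p t w / q w) y z
                              * grad (psi t) y z) x)) ->
  forall t : R, t0 <= t < t0 + eps ->
    deriv_within `[t0, t0 + eps[
      (fun s => Hent Phi (fun x => q x * lpsi s x) q) t
      (H1inner Pi q phi phi2 (fun w => p t w / q w)
         (fun x => phi (lpsi t x)) (psi t)).
Proof.
move=> hst _ _ _ _ hdb _ hPhi _ _ _ _ _ _ _ _ _ _ _ hpos _ hl t ht.
have e : (fun s => Hent Phi (fun x => q x * lpsi s x) q) =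
         (fun s => \sum_(y : S) q y * Phi (lpsi s y)).
  apply/funext => s; rewrite /Hent; apply: eq_bigr => y _.
  case: (eqVneq (q y) 0) => [->|qn0]; first by rewrite !mul0r.
  by rewrite mulrAC mulfV ?mul1r.
rewrite e -(@algebra_id R S Pi q phi phi2 _ _ (psi t) hst.1 hdb).
apply: (@dw_sum R S _ (fun y s => q y * Phi (lpsi s y))) => y.
apply: (@dw_scale R _ (fun s => Phi (lpsi s y))).
apply: (@dw_comp R _ (fun s => lpsi s y) Phi).
  exact: hPhi (hpos t y ht).
exact: hl.
Qed.
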